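(* Let $\mathcal{G}=(V,L)$ be a finite connected undirected graph with monitor set $M$ and non-monitor set $N=V\setminus M$, $\sigma=|N|$, and let the measurement paths be given by Controllable Simple-path Probing (CSP). For $v\in N$ let $\delta^*:=|C_{\mathcal{G}^*}(v,m')|$, $\delta_{\min}:=\min_{m\in M}|C_{\mathcal{G}_m}(v,m')|$ and $\pi_v:=\min(\delta_{\min},\delta^*-1)$. If $\pi_v\le\sigma-2$, then the maximum identifiability index of $v$ under CSP satisfies $\pi_v-1\le\Omega_{\mathrm{CSP}}(v)\le\pi_v$.
   Context: Failure model: a failure set is any $F\subseteq N$; a path fails iff it traverses a node of $F$. $P_F$ is the set of measurement paths traversing a node of $F$; $F_1,F_2$ distinguishable iff $P_{F_1}\ne P_{F_2}$. $S\subseteq N$ is $k$-identifiable if any two failure sets $F_1,F_2$ with $|F_1|,|F_2|\le k$ and $F_1\cap S\ne F_2\cap S$ are distinguishable (every set is trivially $0$-identifiable). $\Omega(v)$ is the maximum $k\in\{0,\dots,\sigma\}$ such that $\{v\}$ is $k$-identifiable. Under CSP, the measurement paths are all simple paths (no repeated nodes) in $\mathcal{G}$ between two distinct monitors. For $M'\subseteq M$, $\mathcal{N}(M')$ is the set of non-monitors adjacent to a monitor in $M'$. $\mathcal{G}^*$: delete all monitors from $\mathcal{G}$, add a virtual node $m'$, link $m'$ to every node of $\mathcal{N}(M)$. For $m\in M$, $\mathcal{G}_m$: delete all monitors from $\mathcal{G}$, add a virtual node $m'$, link $m'$ to every node of $\mathcal{N}(M\setminus\{m\})$. For nodes $s,t$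 of a graph $\mathcal{H}$, $C_{\mathcal{H}}(s,t)$ is a minimum-cardinality set of nodes (other than $s,t$) whose deletion destroys all $s$–$t$ paths; if $s,t$ are adjacent, $C_{\mathcal{H}}(s,t):=V(\mathcal{H})\setminus\{t\}$. *)

(* Defs.v *)
From mathcomp Require Import all_boot.
From mathcomp Require Import boolp.

Set Implicit Arguments.
Unset Strict Implicit.
Unset Printing Implicit Defensive.

Section Defs.
Variables (T : finType) (e : rel T) (M : {set T}).

Definition undirected_graph := symmetric e /\ irreflexive e.
Definition connected_graph := forall x y : T, connect e x y.

Definition nonmon : {set T} := ~: M.
Definition sigma := #|nonmon|.

Definition csp_path (p : seq T) : bool :=
  if p is x0 :: rest then
    [&& path e x0 rest, uniq p, x0 \in M, last x0 rest \in M & x0 != last x0 rest]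
  else false.

Definition PF (F : {set T}) : pred (seq T) :=
  fun p => csp_path p && has (mem F) p.

Definition distinguishable (F1 F2 : {set T}) : Prop := PF F1 <> PF F2.

Definition k_identifiable (S : {set T}) (k : nat) : Prop :=
  forall F1 F2 : {set T}, F1 \subset nonmon -> F2 \subset nonmon ->
    #|F1| <= k -> #|F2| <= k -> F1 :&: S != F2 :&: S ->
    distinguishable F1 F2.

Definition Omega (v : T) : nat :=
  \max_(k < sigma.+1 | `[< k_identifiable [set v] k >]) k.

Definition nbr_set (M' : {set T}) : {set T} :=
  [set y | (y \notin M) && [exists m in M', e m y]].

(* Auxiliary graphs on vertex type option T: None is the virtual node m',
   Some x the original node x.  Vertex set: m' together with the non-monitors. *)
Definition aux_vertices : {set option T} :=
  [set o | if o is Some x then x \notin M else true].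

Definition aux_rel (M' : {set T}) : rel (option T) :=
  fun a b => match a, b with
             | Some x, Some y => e x y
             | None, Some y => y \in nbr_set M'
             | Some x, None => x \in nbr_set M'
             | None, None => false
             end.

Definition Gstar_rel := aux_rel M.
Definition Gm_rel (m : T) := aux_rel (M :\ m).
End Defs.

Section Cut.
Variables (H : finType) (D : {set H}) (eH : rel H).

Definition separates (S : {set H}) (s t : H) : bool :=
  ~~ connect [rel x y | [&& eH x y, x \in D :\: S & y \in D :\: S]] s t.

Definition cut_size (s t : H) : nat :=
  if eH s t then #|D| - 1
  else \big[minn/#|D|]_(S : {set H} | (S \subset D :\: [set s; t]) && separates S s t) #|S|.
End Cut.

(* Main.v *)
Require Import Defs.
From mathcomp Require Import all_boot zify.
From mathcomp Require Import boolp.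
Set Implicit Arguments. Unset Strict Implicit. Unset Printing Implicit Defensive.

Section Seqs.
Variable T : eqType.
Implicit Types (l : seq T) (a : pred T).

Lemma first_in a l : has a l -> exists R1 z R2, [/\ l = R1 ++ z :: R2, a z & ~~ has a R1].
Proof.
elim: l => //= y l IH; case ay: (a y) => /= H.
  by exists [::], y, l.
case: (IH H) => R1 [z [R2 [-> az nh]]]; exists (y :: R1), z, R2; by rewrite /= ay.
Qed.

Lemma last_in a l : has a l -> exists l1 x l2, [/\ l = l1 ++ x :: l2, a x & ~~ has a l2].
Proof.
elim: l => //= y l IH; case hl: (has a l) => H.
  case: (IH hl) => l1 [x [l2 [-> ax nh]]]; by exists (y :: l1), x, l2.
rewrite orbF in H; exists [::], y, l; by rewrite hl.
Qed.

Lemma uniq_catI l1 l2 : uniq l1 -> uniq l2 -> (forall y, y \in l1 -> y \in l2 -> False) -> uniq (l1 ++ l2).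
Proof.
move=> u1 u2 d; rewrite cat_uniq u1 u2 andbT; apply/hasPn => y y2; apply/negP => y1.
exact: (d y).
Qed.
End Seqs.

Section Menger.
Variables (H : finType) (h : rel H) (s t : H).
Hypothesis st : s != t.
Hypothesis cst : connect h s t.
Hypothesis avoid : forall z, z != s -> z != t ->
  connect [rel a b | [&& h a b, a != z & b != z]] s t.

Definition Inv n := exists P1 b P2 B,
  [/\ path h s (P1 ++ b :: P2), last b P2 = t, uniq (s :: P1 ++ b :: P2) &
   [/\ path h s B, last s B = b, uniq (s :: B),
      (forall y, y \in B -> y \in P1 ++ b :: P2 -> y = b) & size P2 = n]].

Lemma path_avoid z x p : path [rel a b | [&& h a b, a != z & b != z]] x p -> z \notin p.
Proof.
elim: p x => //= y p IH x /andP [/and3P [_ _ yz] pp]; rewrite in_cons negb_or eq_sym yz.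
exact: IH pp.
Qed.

Lemma path_split R1 L0 x R3 : s :: R1 = L0 ++ x :: R3 -> path h s R1 ->
  path h x R3 /\ last s R1 = last x R3.
Proof.
case: L0 => [|u L0] /= [-> ->] //.
rewrite cat_path /= => /and3P [_ _ ->]; by rewrite last_cat.
Qed.

Lemma Inv_init : exists n, Inv n.
Proof.
case/connectP: cst => p0 pp0 e0; move: e0.
case/shortenP: pp0 => p pp up _ ep.
case: p pp up ep => [|a P2] pp up ep; first by move: st; rewrite /= ep eqxx.
exists (size P2), [::], a, P2, [:: a]; do 2 split=> //.
- by move: pp => /= /andP[->].
- by move: up => /= /andP[]; rewrite !inE negb_or andbT => /andP[-> _].
- by move=> y; rewrite inE => /eqP.
Qed.

Lemma Inv_step n : Inv n.+1 -> exists2 m, m <= n & Inv m.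
Proof.
case=> P1 [b [P2 [B [pP lP uP [pB lB uB dBP sP2]]]]].
have P2ne : P2 != [::] by case: P2 sP2 {pP lP uP dBP}.
have tP2 : t \in P2 by case: P2 P2ne lP {pP uP dBP sP2} => //= y P2 _ <-; exact: mem_last.
have uSP : uniq (s :: P1) by move: uP; rewrite -cat_cons cat_uniq => /andP[].
have := uP; rewrite /= mem_cat in_cons !negb_or => /andP[H1 H2]; move: H1 => /and3P[nsP1 nsb sP2']; move: H2.
rewrite cat_uniq /= => /and3P[uP1 /norP[bP1 P1P2] /andP[bP2 uP2]].
have bt : b != t by apply: contraNneq bP2 => ->.
have bs : b != s by rewrite eq_sym.
have sP1P2 y : y \in s :: P1 -> y \in P2 -> False.
  rewrite in_cons => /orP[/eqP -> |yP1 yP2]; first by rewrite (negbTE sP2').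
  by move/hasPn: P1P2 => /(_ y yP2); rewrite yP1.
have BP2 y : y \in s :: B -> y \in P2 -> False.
  rewrite in_cons => /orP[/eqP -> |yB yP2]; first by rewrite (negbTE sP2').
  have := dBP y yB; rewrite mem_cat in_cons yP2 !orbT => /(_ isT) yb.
  by rewrite -yb yP2 in bP2.
case/connectP: (avoid bs bt) => R0 pR0 eR0; move: eR0.
case/shortenP: pR0 => R pRa uR _ eR.
have pR : path h s R by apply: sub_path pRa => u w /and3P[].
have bR : b \notin R := path_avoid pRa.
have tR : t \in R.
  have: t \in s :: R by rewrite eR mem_last.
  by rewrite in_cons eq_sym (negbTE st).
have hasP2 : has (fun y => y \in P2) R by apply/hasP; exists t.
case: (first_in hasP2) => R1 [z [R2 [eR12 zP2 nR1]]].
set X := s :: P1 ++ B.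
have hX : has (fun y => y \in X) (s :: R1) by rewrite /= inE eqxx.
case: (last_in hX) => L0 [x [R3 [eL xX nR3]]].
move: pR; rewrite eR12 cat_path /= => /and3P[pR1 hz _].
case: (path_split eL pR1) => pR3 lR1.
have R1R : forall y, y \in R1 -> y \in R by move=> y yR; rewrite eR12 mem_cat yR.
have inR3 y : y \in R3 -> [/\ y \notin P2, y \notin X & y != b].
  move=> yR3.
  have yX : y \notin X by move/hasPn: nR3 => /(_ y yR3).
  have : y \in s :: R1 by rewrite eL mem_cat in_cons yR3 !orbT.
  rewrite in_cons => /orP[/eqP ys | yR1]; first by rewrite ys /X inE eqxx in yX.
  split=> //; first by move/hasPn: nR1 => /(_ y yR1).
  by apply: contraNneq bR => <-; apply: R1R.
have xb : x != b.
  have : x \in s :: R1 by rewrite eL mem_cat in_cons eqxx orbT.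
  rewrite in_cons => /orP[/eqP -> // | xR1].
  by apply: contraNneq bR => <-; apply: R1R.
have uxR3 : uniq (x :: R3).
  move: uR; rewrite eR12 -cat_cons cat_uniq => /andP[].
  by rewrite eL cat_uniq => /and3P[_ _].
have zR3 : z \notin R3 by apply/negP => /inR3 []; rewrite zP2.
have [P2a [P2b eP2]] : exists P2a P2b, P2 = P2a ++ z :: P2b.
  by case/splitPr: zP2 => P2a P2b; exists P2a, P2b.
move: (uP2); rewrite eP2 cat_uniq /= => /and3P[uP2a /norP[zP2a P2aP2b] /andP[zP2b uP2b]].
have P2ab y : y \in P2a -> y \in P2b -> False.
  by move=> ya yb; move/hasPn: P2aP2b => /(_ y yb); rewrite ya.
have yP2 y : (y \in P2a) || (y == z) || (y \in P2b) -> y \in P2.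
  by rewrite eP2 mem_cat in_cons orbA.
move: pP; rewrite cat_path /= => /and3P[pP1 hb].
rewrite eP2 cat_path /= => /and3P[pP2a hz' pP2b].
move: lP; rewrite eP2 last_cat /= => lz.
have szb : size P2b <= n by move: sP2; rewrite eP2 size_cat /= addnS => -[<-]; apply: leq_addl.
have uRz : uniq (R3 ++ z :: P2b).
  apply: uniq_catI; [by case/andP: uxR3 | by rewrite /= zP2b uP2b |].
  by move=> y /inR3 [yn _ _]; rewrite in_cons => yz; case/negP: yn; apply: yP2; rewrite -orbA yz orbT.
exists (size P2b) => //.
have SPX y : y \in s :: P1 -> y \in X by move=> yP; rewrite /X -cat_cons mem_cat yP.
have SBX y : y \in s :: B -> y \in X.
  rewrite in_cons => /orP[/eqP -> | yB]; first by rewrite /X inE eqxx.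
  by rewrite /X -cat_cons mem_cat yB orbT.
have inP2 y : (y == z) || (y \in P2b) -> y \in P2.
  by move=> yz; apply: yP2; rewrite -orbA yz orbT.
have inP2a y : y \in P2a -> y \in P2 by move=> ya; apply: yP2; rewrite ya.
case xP1: (x \in s :: P1).
  have [Pre [W [eP1 lPre]]] : exists Pre W, P1 = Pre ++ W /\ last s Pre = x.
    by case/splitPl: xP1 => Pre W lPre; exists Pre, W.
  have PreP1 y : y \in Pre -> y \in P1 by move=> yP; rewrite eP1 mem_cat yP.
  exists (Pre ++ R3), z, P2b, (B ++ rcons P2a z); split; last split.
  - rewrite -catA cat_path; move: pP1; rewrite eP1 cat_path => /andP[-> _].
    by rewrite lPre cat_path pR3 /= -lR1 hz pP2b.
  - exact: lz.
  - rewrite -catA -cat_cons; apply: uniq_catI => //.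
      by move: uSP; rewrite eP1 -cat_cons cat_uniq => /andP[].
    move=> y yPre; have yS : y \in s :: P1 by rewrite eP1 -cat_cons mem_cat yPre.
    rewrite mem_cat => /orP[/inR3[_ yX _] | yz]; first by rewrite SPX in yX.
    by apply: (sP1P2 y yS); apply: inP2; rewrite in_cons in yz.
  - by rewrite cat_path pB lB rcons_path pP2a hz'.
  - by rewrite last_cat last_rcons.
  - rewrite -cat_cons; apply: uniq_catI => //; first by rewrite rcons_uniq zP2a uP2a.
    move=> y yB; rewrite mem_rcons in_cons => yz; apply: (BP2 y yB).
    by case/orP: yz => [/eqP ->|/inP2a //]; apply: inP2; rewrite eqxx.
  - move=> y; rewrite mem_cat => /orP[yB | yP].
      rewrite -catA mem_cat => /orP[yPre | ].
        have yP1 := PreP1 y yPre.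
        have := dBP y yB; rewrite mem_cat yP1 => /(_ isT) yb.
        by rewrite -yb yP1 in bP1.
      rewrite mem_cat => /orP[/inR3[_ yX _] | yz].
        by rewrite SBX // in_cons yB orbT in yX.
      by exfalso; apply: (BP2 y); [rewrite in_cons yB orbT | apply: inP2; rewrite in_cons in yz].
    move: yP; rewrite mem_rcons in_cons => /orP[/eqP -> // | ya].
    rewrite -catA mem_cat => /orP[yPre | ].
      by exfalso; apply: (sP1P2 y); [rewrite in_cons PreP1 ?orbT | apply: inP2a].
    rewrite mem_cat => /orP[/inR3[yn _ _] | ]; first by rewrite inP2a in yn.
    by rewrite in_cons => /orP[/eqP -> // | yb]; exfalso; apply: (P2ab y).
  - by [].
have xB : x \in s :: B.
  by rewrite in_cons; apply/orP; right; move: xX; rewrite /X -cat_cons mem_cat xP1.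
have [Bp [Bq [eB lBp]]] : exists Bp Bq, B = Bp ++ Bq /\ last s Bp = x.
  by case/splitPl: xB => Bp Bq lBp; exists Bp, Bq.
have BpB y : y \in Bp -> y \in B by move=> yP; rewrite eB mem_cat yP.
exists (Bp ++ R3), z, P2b, (P1 ++ b :: rcons P2a z); split; last split.
- rewrite -catA cat_path; move: pB; rewrite eB cat_path => /andP[-> _].
  by rewrite lBp cat_path pR3 /= -lR1 hz pP2b.
- exact: lz.
- rewrite -catA -cat_cons; apply: uniq_catI => //.
    by move: uB; rewrite eB -cat_cons cat_uniq => /andP[].
  move=> y yBp; have yS : y \in s :: B by rewrite eB -cat_cons mem_cat yBp.
  rewrite mem_cat => /orP[/inR3[_ yX _] | yz]; first by rewrite SBX in yX.
  by apply: (BP2 y yS); apply: inP2; rewrite in_cons in yz.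
- by rewrite cat_path pP1 /= hb rcons_path pP2a hz'.
- by rewrite last_cat /= last_rcons.
- have E : s :: P1 ++ b :: P2a ++ z :: P2b = (s :: P1 ++ b :: rcons P2a z) ++ P2b.
    by rewrite -cats1 /= -catA /= -catA.
  by move: uP; rewrite eP2 E cat_uniq => /andP[].
- move=> y; rewrite mem_cat in_cons mem_rcons in_cons => /or3P[yP1 | /eqP yb | /orP[/eqP -> // | ya]].
  + rewrite -catA mem_cat => /orP[yBp | ].
      have := dBP y (BpB y yBp); rewrite mem_cat yP1 => /(_ isT) yb.
      by rewrite -yb yP1 in bP1.
    rewrite mem_cat => /orP[/inR3[_ yX _] | yz].
      by rewrite SPX // in_cons yP1 orbT in yX.
    by exfalso; apply: (sP1P2 y); [rewrite in_cons yP1 orbT | apply: inP2; rewrite in_cons in yz].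
  + subst y; rewrite -catA mem_cat => /orP[bBp | ].
      have : b \in x :: Bq by rewrite -lB eB last_cat lBp mem_last.
      rewrite in_cons eq_sym (negbTE xb) /= => bBq.
      move: uB; rewrite eB /= cat_uniq => /andP[_ /and3P[_ /hasPn nh _]].
      by have := nh b bBq; rewrite /= bBp.
    rewrite mem_cat => /orP[/inR3[_ _ bb] | bz]; first by rewrite eqxx in bb.
    by exfalso; move: bP2; rewrite inP2 //; rewrite in_cons in bz.
  + rewrite -catA mem_cat => /orP[yBp | ].
      by exfalso; apply: (BP2 y); [rewrite in_cons BpB ?orbT | apply: inP2a].
    rewrite mem_cat => /orP[/inR3[yn _ _] | ]; first by rewrite inP2a in yn.
    by rewrite in_cons => /orP[/eqP -> // | yb]; exfalso; apply: (P2ab y).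
- by [].
Qed.

Lemma Inv0 : Inv 0.
Proof.
have [n In] := Inv_init.
elim: n {-2}n (leqnn n) In => [|N IH] n.
  by rewrite leqn0 => /eqP ->.
case: n => [|n] // le In.
have [m lm Im] := Inv_step In.
by apply: (IH m) => //; apply: leq_trans lm _.
Qed.

Lemma menger2 : exists p q, [/\ path h s p, last s p = t, uniq (s :: p) &
  [/\ path h s q, last s q = t, uniq (s :: q) & forall x, x \in p -> x \in q -> x = t]].
Proof.
case: Inv0 => P1 [b [P2 [B [pP lP uP [pB lB uB dBP sP2]]]]].
case: P2 sP2 pP lP uP dBP => // _ pP /= lP uP dBP.
exists (P1 ++ [:: b]), B; rewrite -lP; split => //; first by rewrite last_cat.
by split=> // x xP xB; apply: dBP.
Qed.
End Menger.

Lemma bigmin_le (I : finType) (P : pred I) (F : I -> nat) x0 i :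
  P i -> \big[minn/x0]_(j | P j) F j <= F i.
Proof.
move=> Pi; have : i \in index_enum I by rewrite mem_index_enum.
elim: (index_enum I) => // j r IH; rewrite in_cons big_cons => /orP[/eqP <- | ir].
  by rewrite Pi geq_minl.
case: ifP => _; last exact: IH.
by rewrite geq_min IH ?orbT.
Qed.

Lemma bigmin_att (I : finType) (P : pred I) (F : I -> nat) x0 :
  \big[minn/x0]_(j | P j) F j = x0 \/ exists2 i, P i & \big[minn/x0]_(j | P j) F j = F i.
Proof.
apply: (big_ind (fun y => y = x0 \/ exists2 i, P i & y = F i)); [by left | | by move=> i Pi; right; exists i].
by move=> x y Hx Hy; rewrite /minn; case: ifP.
Qed.

Lemma cut_le (H : finType) (D : {set H}) (eH : rel H) (S : {set H}) (s t : H) :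
  s \in D -> t \in D -> S \subset D :\: [set s; t] -> separates D eH S s t ->
  cut_size D eH s t <= #|S|.
Proof.
move=> sD tD sub; rewrite /cut_size.
have [sS tS] : s \notin S /\ t \notin S.
  by split; apply/negP => /(subsetP sub); rewrite !inE eqxx ?orbT.
case: ifP => [est | _ sep].
  by rewrite /separates => /negP []; apply: connect1; rewrite /= est !inE sS tS sD tD.
by apply: bigmin_le; rewrite sub sep.
Qed.

Lemma cut_att (H : finType) (D : {set H}) (eH : rel H) (s t : H) :
  ~~ eH s t -> cut_size D eH s t < #|D| ->
  exists S : {set H}, [/\ S \subset D :\: [set s; t], separates D eH S s t & #|S| = cut_size D eH s t].
Proof.
rewrite /cut_size => /negbTE ->.
case: (bigmin_att (fun S : {set H} => (S \subset D :\: [set s; t]) && separates D eH S s t) (fun S => #|S|) #|D|) => [-> | [S /andP[PS1 PS2] ->]]; first by rewrite ltnn.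
by exists S.
Qed.

Section Main.
Variables (T : finType) (e : rel T) (M : {set T}) (v : T).
Hypothesis esy : symmetric e.
Hypothesis vN : v \notin M.

Notation D := (aux_vertices M).

Lemma SomeI : injective (@Some T). Proof. by move=> a b []. Qed.

Lemma inD x : (Some x \in D) = (x \notin M). Proof. by rewrite inE. Qed.
Lemma NoneD : None \in D. Proof. by rewrite inE. Qed.

Lemma card_aux : #|D| = (sigma M).+1.
Proof.
have -> : D = None |: (Some @: nonmon M).
  apply/setP => -[x|]; rewrite !inE //=.
  by rewrite (mem_imset _ _ SomeI) inE.
rewrite cardsU1 card_imset; last exact: SomeI.
suff -> : None \notin Some @: nonmon M by [].
by apply/imsetP => -[].
Qed.

Lemma card_someS (S : {set option T}) : None \notin S -> #|[set x | Some x \in S]| = #|S|.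
Proof.
move=> nS; have -> : S = Some @: [set x | Some x \in S].
  apply/setP => -[x|]; first by rewrite (mem_imset _ _ SomeI) inE.
  by rewrite (negbTE nS); apply/esym/imsetP => -[].
rewrite card_imset; last exact: SomeI.
by apply: eq_card => x; rewrite !inE (mem_imset _ _ SomeI) inE.
Qed.


Definition hr (X : {set T}) : rel (option T) := fun a b =>
  match a, b with
  | Some x, Some y => [&& e x y, x \notin X & y \notin X]
  | Some x, None => (x \in M) && (x \notin X)
  | None, _ => false
  end.

Definition rS (M' : {set T}) (S : {set option T}) : rel (option T) :=
  [rel a b | [&& aux_rel e M M' a b, a \in D :\: S & b \in D :\: S]].

Lemma sepE M' S : separates D (aux_rel e M M') S (Some v) None = ~~ connect (rS M' S) (Some v) None.
Proof. by []. Qed.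

Lemma inDS X x : (Some x \in D :\: Some @: (X :\: M)) = (x \notin M) && (x \notin X).
Proof.
rewrite in_setD (mem_imset _ _ SomeI) in_setD inD.
by case: (x \in M); rewrite ?andbF //= andbT.
Qed.

Lemma sep_gen (M' X : {set T}) : M' \subset M -> [disjoint M' & X] ->
  ~~ connect (hr X) (Some v) None ->
  separates D (aux_rel e M M') (Some @: (X :\: M)) (Some v) None.
Proof.
move=> sM dMX nc; rewrite sepE; apply: contra nc => /connectP [p pp ep].
pose Pinv a := connect (hr X) (Some v) None ||
  (if a is Some x then connect (hr X) (Some v) (Some x) else false).
suff HP : Pinv (last (Some v) p) by move: HP; rewrite -ep => /orP[].
have : Pinv (Some v) by rewrite /Pinv connect0 orbT.
elim: p (Some v) pp {ep} => //= b p IH a /andP[rab pp] Pa; apply: IH => //.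
clear pp; move: rab Pa; rewrite /Pinv /=; case: a => [x|]; last by move=> _ /orP[-> | ].
move=> /and3P[ar aD bD] /orP[-> // | cx]; apply/orP.
case: b ar bD => [y|] /= ar bD.
  right; apply: connect_trans cx (connect1 _) => /=.
  by move: aD bD; rewrite !inDS ar => /andP[_ ->] /andP[_ ->].
left; move: ar; rewrite /nbr_set inE => /andP[xM /existsP[m /andP[mM' emx]]].
have mM : m \in M by apply: (subsetP sM).
have mX : m \notin X by rewrite (disjointFr dMX mM').
apply: connect_trans cx (connect_trans (connect1 (_ : hr X (Some x) (Some m))) (connect1 (_ : hr X (Some m) None))).
  by rewrite /= esy emx mX andbT; move: aD; rewrite inDS => /andP[].
by rewrite /= mM mX.
Qed.

Lemma hr_path X x p : path (hr X) (Some x) p -> last (Some x) p = None ->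
  exists p', [/\ p = rcons (map Some p') None, path e x p', all (fun y => y \notin X) p' & last x p' \in M].
Proof.
elim: p x => //= -[y|] p IH x /andP[hxy pp] l.
  case: (IH y pp l) => p' [-> pp' ap' lp']; exists (y :: p').
  by case/and3P: hxy => exy _ ynX; rewrite /= exy pp' ynX ap' lp'.
case: p pp l {IH} => //= _ _; case/andP: hxy => xM _; by exists [::].
Qed.

Lemma fm (M' : {set T}) (S : {set option T}) x q : path e x q -> x \notin M -> Some x \notin S -> None \notin S -> last x q \in M ->
  has (fun y => Some y \in S) q \/
  exists m0, [/\ m0 \in M, m0 \in q & (m0 \in M' -> connect (rS M' S) (Some x) None)].
Proof.
elim: q x => [|y q IH] x /=; first by move=> _ /negP.
move=> /andP[exy pq] xM xS nS lq.
case yS: (Some y \in S); first by left.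
case yM: (y \in M).
  right; exists y; split; rewrite ?in_cons ?eqxx // => yM'.
  apply: connect1; rewrite /rS /= /nbr_set !inE xM nS xS /=.
  by rewrite andbT; apply/existsP; exists y; rewrite yM' esy exy.
case: (IH y pq (negbT yM) (negbT yS) nS lq) => [h | [m0 [m0M m0q c]]]; first by left.
right; exists m0; split; rewrite ?in_cons ?m0q ?orbT // => m0M'.
apply: connect_trans (connect1 _) (c m0M').
by rewrite /rS /= !inE xM xS yM yS exy.
Qed.

Lemma csp_split p : csp_path e M p -> v \in p ->
  exists ql qr, [/\ path e v ql, last v ql \in M, path e v qr & last v qr \in M] /\
    [/\ (forall y, y \in ql -> y \in qr -> False), {subset ql <= p} & {subset qr <= p}].
Proof.
case: p => // x0 rest /and5P[pr ur x0M lM _] vp.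
have vr : v \in rest by move: vp; rewrite in_cons => /orP[/eqP vx|//]; by move: vN; rewrite vx x0M.
case/splitPr: vr pr ur lM vp => L1 L2 pr ur lM vp.
move: pr; rewrite cat_path /= => /and3P[p1 h1 p2].
exists (rev (x0 :: L1)), L2; split; split => //.
- have := rev_path e x0 (rcons L1 v); rewrite last_rcons belast_rcons => ->.
  rewrite (@eq_path _ _ e); first by rewrite rcons_path p1 h1.
  by move=> a b; exact: esy.
- by rewrite rev_cons last_rcons.
- by move: lM; rewrite last_cat.
- move=> y; rewrite mem_rev => y1 y2.
  move: ur; rewrite -cat_cons cat_uniq => /and3P[_ /hasPn nh _].
  by have := nh y; rewrite in_cons y2 orbT y1 => /(_ isT).
- by move=> y; rewrite mem_rev -cat_cons mem_cat => ->.
- by move=> y yL; rewrite in_cons mem_cat in_cons yL !orbT.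
Qed.

Lemma sides (M' : {set T}) (S : {set option T}) p : csp_path e M p -> v \in p -> None \notin S -> Some v \notin S ->
  ~~ connect (rS M' S) (Some v) None ->
  exists ql qr, [/\ (forall y, y \in ql -> y \in qr -> False), {subset ql <= p}, {subset qr <= p},
     (has (fun y => Some y \in S) ql \/ exists2 m0, m0 \in ql & (m0 \in M) && (m0 \notin M')) &
     (has (fun y => Some y \in S) qr \/ exists2 m0, m0 \in qr & (m0 \in M) && (m0 \notin M'))].
Proof.
move=> cp vp nS vS nc.
case: (csp_split cp vp) => ql [qr [[pl ll pr lr] [dj sl sr]]].
exists ql, qr; split => //.
  case: (fm M' pl vN vS nS ll) => [h|[m0 [m0M m0q c]]]; [by left | right; exists m0 => //].
  by rewrite m0M; apply/negP => /c; apply/negP.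
case: (fm M' pr vN vS nS lr) => [h|[m0 [m0M m0q c]]]; [by left | right; exists m0 => //].
by rewrite m0M; apply/negP => /c; apply/negP.
Qed.

Lemma PF_eq1 m (S : {set option T}) : None \notin S -> Some v \notin S ->
  separates D (Gm_rel e M m) S (Some v) None ->
  PF e M (v |: [set x | Some x \in S]) = PF e M [set x | Some x \in S].
Proof.
move=> nS vS sep; apply: funext => p; rewrite /PF.
case cp: (csp_path e M p) => //=.
case vp: (v \in p); last first.
  apply: eq_in_has => y yp; rewrite !inE; case: eqP => // yv; by rewrite yv vp in yp.
have -> : has (mem (v |: [set x | Some x \in S])) p by apply/hasP; exists v; rewrite // !inE eqxx.
symmetry.
case: (sides (M' := M :\ m) cp vp nS vS sep) => ql [qr [dj sl sr hl hr']].
have conv q : {subset q <= p} -> has (fun y => Some y \in S) q -> has (mem [set x | Some x \in S]) p.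
  by move=> sq /hasP[y yq yS]; apply/hasP; exists y; [exact: (sq y yq) | rewrite /= inE].
case: hl => [h|[m0 m0l /andP[m0M m0n]]]; first exact: conv h.
case: hr' => [h|[m1 m1r /andP[m1M m1n]]]; first exact: conv h.
move: m0n m1n; rewrite !inE m0M m1M !andbT !negbK => /eqP e0 /eqP e1.
by exfalso; apply: (dj m0) => //; rewrite e0 -e1.
Qed.

Lemma PF_eq2 (S : {set option T}) c : None \notin S -> Some v \notin S ->
  separates D (Gstar_rel e M) S (Some v) None ->
  PF e M (v |: ([set x | Some x \in S] :\ c)) = PF e M ([set x | Some x \in S] :\ c).
Proof.
move=> nS vS sep; apply: funext => p; rewrite /PF.
case cp: (csp_path e M p) => //=.
case vp: (v \in p); last first.
  apply: eq_in_has => y yp; rewrite !inE; case: eqP => // yv; by rewrite yv vp in yp.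
have -> : has (mem (v |: ([set x | Some x \in S] :\ c))) p by apply/hasP; exists v; rewrite // !inE eqxx.
symmetry.
case: (sides (M' := M) cp vp nS vS sep) => ql [qr [dj sl sr hl hr']].
have noM q : (exists2 m0, m0 \in q & (m0 \in M) && (m0 \notin M)) -> False.
  by case=> m0 _; case: (m0 \in M).
case: hl => [/hasP[y1 y1l y1S] | /noM //].
case: hr' => [/hasP[y2 y2r y2S] | /noM //].
apply/hasP; case: (eqVneq y1 c) => [y1c | y1c].
  exists y2; first exact: (sr y2 y2r).
  rewrite !inE y2S andbT; apply/eqP => y2c; apply: (dj y1) => //; by rewrite y1c -y2c.
by exists y1; [exact: (sl y1 y1l) | rewrite !inE y1S y1c].
Qed.

Lemma not_ki (F1 F2 : {set T}) k : F1 \subset nonmon M -> F2 \subset nonmon M ->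
  #|F1| <= k -> #|F2| <= k ->
  v \in F1 -> v \notin F2 -> PF e M F1 = PF e M F2 -> ~ k_identifiable e M [set v] k.
Proof.
move=> s1 s2 c1 c2 v1 v2 E KI; apply: (KI F1 F2 s1 s2 c1 c2) => //.
apply/negP => /eqP E'; have : v \in F1 :&: [set v] by rewrite !inE v1 eqxx.
by rewrite E' !inE (negbTE v2).
Qed.

Lemma conn_of (X M' : {set T}) : M' \subset M -> [disjoint M' & X] -> v \notin X ->
  #|X :\: M| < cut_size D (aux_rel e M M') (Some v) None -> connect (hr X) (Some v) None.
Proof.
move=> sM dj vX lt; apply: contraLR lt => nc; rewrite -leqNgt.
have sub : Some @: (X :\: M) \subset D :\: [set Some v; None].
  apply/subsetP => _ /imsetP[x xX ->]; move: xX; rewrite !inE => /andP[xM xX].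
  rewrite xM andbT; apply/negP => /orP[/eqP [xv] | //]; by rewrite -xv xX in vX.
have sD : Some v \in D by rewrite inD.
apply: leq_trans (cut_le sD NoneD sub (sep_gen sM dj nc)) _.
by rewrite card_imset //; exact: SomeI.
Qed.

Lemma mkL p' q' : path e v p' -> last v p' \in M -> path e v q' -> last v q' \in M ->
  uniq (v :: p') -> uniq (v :: q') -> (forall y, y \in p' -> y \in q' -> False) ->
  csp_path e M (rev (v :: p') ++ q').
Proof.
move=> pp lp pq lq up uq dj.
have uL : uniq (rev (v :: p') ++ q').
  rewrite cat_uniq rev_uniq up; move: uq; rewrite cons_uniq => /andP[vq uq']; rewrite uq' andbT /=.
  apply/hasPn => y yq; rewrite mem_rev in_cons; apply/negP => /orP[/eqP yv | yp].
    by rewrite -yv yq in vq.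
  exact: (dj y).
move: pp lp up dj uL; case/lastP: p' => [|pb x0]; first by rewrite /= (negbTE vN).
rewrite last_rcons => pp x0M up dj.
rewrite rev_cons rev_rcons /= => uL.
rewrite uL x0M cat_path last_rcons pq last_cat last_rcons lq /= andbT.
apply/andP; split.
  rewrite -rev_cons; have := rev_path e v (rcons pb x0); rewrite last_rcons belast_rcons => ->.
  by rewrite (@eq_path _ _ e) // => a b; exact: esy.
apply/eqP => E; have : last v q' \in v :: q' by exact: mem_last.
rewrite -E in_cons => /orP[/eqP x0v | x0q]; first by move: vN; rewrite -x0v x0M.
by apply: (dj x0) => //; rewrite mem_rcons in_cons eqxx.
Qed.

Lemma exists_path (F : {set T}) : F \subset nonmon M -> v \notin F ->
  #|F|.+1 < cut_size D (Gstar_rel e M) (Some v) None ->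
  (forall m, m \in M -> #|F| < cut_size D (Gm_rel e M m) (Some v) None) ->
  exists L, [&& csp_path e M L, v \in L & ~~ has (mem F) L].
Proof.
rewrite /Gstar_rel /Gm_rel => FN vF hs hm.
have FM x : x \in F -> x \notin M by move=> xF; move/subsetP: FN => /(_ x xF); rewrite inE.
have cst : connect (hr F) (Some v) None.
  apply: (@conn_of _ M) => //.
    rewrite disjoints_subset; apply/subsetP => x xM; rewrite inE; apply/negP => xF.
    by have := FM x xF; rewrite xM.
  exact: leq_ltn_trans (subset_leq_card (subsetDl F M)) (ltnW hs).
have av : forall z, z != Some v -> z != None ->
    connect [rel a b | [&& hr F a b, a != z & b != z]] (Some v) None.
  move=> [w|] // zv _.
  have vw : v != w by apply: contraNneq zv => ->.
  have vX : v \notin w |: F by rewrite !inE negb_or vw vF.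
  have cw : connect (hr (w |: F)) (Some v) None.
    case wM: (w \in M).
      apply: (@conn_of _ (M :\ w)) => //; first exact: subsetDl.
        rewrite disjoints_subset; apply/subsetP => x; rewrite !inE => /andP[xw xM].
        rewrite negb_or xw /=; apply/negP => xF; by have := FM x xF; rewrite xM.
      apply: leq_ltn_trans (hm w wM); apply: subset_leq_card; apply/subsetP => x.
      rewrite !inE => /andP[xM /orP[/eqP xw | //]]; by rewrite xw wM in xM.
    apply: (@conn_of _ M) => //.
      rewrite disjoints_subset; apply/subsetP => x xM; rewrite !inE negb_or.
      apply/andP; split; first by apply: contraTneq xM => ->; rewrite wM.
      by apply/negP => xF; have := FM x xF; rewrite xM.
    apply: leq_ltn_trans hs; apply: leq_trans (subset_leq_card (subsetDl _ _)) _.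
    by rewrite cardsU1; case: (w \notin F); rewrite ?add1n ?add0n ?leqnSn.
  apply: (connect_sub _ cw) => a b hab; apply: connect1.
  case: a b hab => [x|] [y|] //=; rewrite !inE ?negb_or.
    by case/and3P => -> /andP[-> ->] /andP[-> ->].
  by case/andP => -> /andP[-> ->].
have [p [q [[pp lp up] [pq lq uq dj]]]] := menger2 (isT : Some v != None) cst av.
case: (hr_path pp lp) => p' [ep pp' ap' lp'].
case: (hr_path pq lq) => q' [eq pq' aq' lq'].
have up' : uniq (v :: p').
  move: up; rewrite ep -[Some v :: _]/(rcons (map Some (v :: p')) None) rcons_uniq.
  by rewrite (map_inj_uniq SomeI) => /andP[].
have uq' : uniq (v :: q').
  move: uq; rewrite eq -[Some v :: _]/(rcons (map Some (v :: q')) None) rcons_uniq.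
  by rewrite (map_inj_uniq SomeI) => /andP[].
have dj' y : y \in p' -> y \in q' -> False.
  move=> yp yq; have := dj (Some y).
  by rewrite ep eq !mem_rcons !in_cons !(mem_map SomeI) yp yq => /(_ isT isT).
exists (rev (v :: p') ++ q'); rewrite mkL // mem_cat mem_rev in_cons eqxx /=.
apply/hasPn => y; rewrite mem_cat mem_rev in_cons => /orP[/orP[/eqP -> // | yp] | yq].
  exact: (allP ap').
exact: (allP aq').
Qed.

End Main.

Lemma ar1 a s t : a + 2 <= s -> s <= t -> a < t.+1. Proof. lia. Qed.
Lemma ar2 a : a + 2 <= a -> False. Proof. lia. Qed.
Lemma ar3 d s : 0 < s -> (d - 1) + 2 <= s -> d = s -> False. Proof. lia. Qed.
Lemma ar4 d s : (d - 1) + 2 <= s -> d < s.+1. Proof. lia. Qed.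
Lemma ar6 p s : p + 2 <= s -> p - 1 < s.+1. Proof. lia. Qed.
Lemma ar7 b p d : b <= p - 1 -> p <= d - 1 -> 1 < p -> b.+1 < d. Proof. lia. Qed.
Lemma ar8 b p c : b <= p - 1 -> p <= c -> 1 < p -> b < c. Proof. lia. Qed.
Lemma ar9 a c d : a <= c - 1 -> c = d -> a.+1 <= (d - 1).+1. Proof. lia. Qed.

Lemma cardU1_le (T : finType) (x : T) (A : {set T}) : #|x |: A| <= #|A|.+1.
Proof. by rewrite cardsU1; case: (x \notin A); rewrite ?add1n ?add0n ?leqnSn. Qed.

Unset Implicit Arguments.

Theorem theorem5 (T : finType) (e : rel T) (M : {set T}) (v : T) :
  undirected_graph e -> connected_graph e ->
  M != set0 ->
  v \in nonmon M ->
  let delta_star := cut_size (aux_vertices M) (Gstar_rel e M) (Some v) None in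
  let delta_min := \big[minn/#|T|.+1]_(m in M)
                     cut_size (aux_vertices M) (Gm_rel e M m) (Some v) None in
  let pi_v := minn delta_min (delta_star - 1) in
  pi_v + 2 <= sigma M ->
  pi_v - 1 <= Omega e M v <= pi_v.
Proof.
move=> [esy _] _ _ vN0 dstar dmin piv hpi.
have vN : v \notin M by move: vN0; rewrite inE.
have cD := card_aux M.
have sgpos : 0 < sigma M by apply/card_gt0P; exists v.
have sgT : sigma M <= #|T| by apply: max_card.
have sub_nm (S : {set option T}) : S \subset aux_vertices M :\: [set Some v; None] ->
    [/\ None \notin S, Some v \notin S & [set x | Some x \in S] \subset nonmon M].
  move=> sub; split.
  - by apply/negP => /(subsetP sub); rewrite !inE eqxx ?orbT.
  - by apply/negP => /(subsetP sub); rewrite !inE eqxx ?orbT.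
  - by apply/subsetP => x; rewrite inE => /(subsetP sub); rewrite !inE => /andP[_ ->].
apply/andP; split.
  case: (leqP piv 1) => hp.
    by rewrite (_ : piv - 1 = 0) //; apply/eqP; rewrite subn_eq0.
  have lt : piv - 1 < (sigma M).+1 by apply: ar6 hpi.
  have Ki : k_identifiable e M [set v] (piv - 1).
    have key (A B : {set T}) : B \subset nonmon M -> #|B| <= piv - 1 ->
        v \in A -> v \notin B -> PF e M A <> PF e M B.
      move=> sB cB vA vB E.
      have h1 : #|B|.+1 < dstar by apply: ar7 cB (geq_minr _ _) hp.
      have h2 : forall m, m \in M -> #|B| < cut_size (aux_vertices M) (Gm_rel e M m) (Some v) None.
        move=> m mM; apply: ar8 cB _ hp; apply: leq_trans (geq_minl _ _) _.
        exact: (bigmin_le (P := fun m => m \in M)).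
      case: (exists_path esy vN sB vB h1 h2) => L /and3P[cL vL nL].
      have := congr1 (fun f => f L) E; rewrite /PF /= cL (negbTE nL) /=.
      by have -> : has (mem A) L by apply/hasP; exists v.
    move=> F1 F2 s1 s2 c1 c2 neq.
    have eqv : (v \in F1) = (v \in F2) -> False.
      move=> E; move/negP: neq; apply; apply/eqP/setP => x; rewrite !inE.
      by case: (eqVneq x v) => [-> | _]; rewrite ?E ?andbT ?andbF.
    case v1: (v \in F1); case v2: (v \in F2); rewrite ?v1 ?v2 in eqv.
    - by exfalso; apply: eqv.
    - exact: (key F1 F2 s2 c2 v1 (negbT v2)).
    - by move=> E; apply: (key F2 F1 s1 c1 v2 (negbT v1)); rewrite E.
    - by exfalso; apply: eqv.
  rewrite /Omega; apply: (@leq_bigmax_cond _ _ _ (Ordinal lt)) => /=.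
  by apply/asboolP.
suff nk : ~ k_identifiable e M [set v] piv.+1.
  apply/bigmax_leqP => i /asboolP Ki; rewrite leqNgt; apply/negP => lt; apply: nk.
  move=> F1 F2 s1 s2 c1 c2; apply: Ki => //; [exact: leq_trans c1 lt | exact: leq_trans c2 lt].
case: (leqP dmin (dstar - 1)) => hd.
  have pe : piv = dmin by rewrite /piv; apply/minn_idPl.
  have dlt : dmin < #|T|.+1 by rewrite -pe; apply: ar1 hpi sgT.
  case: (bigmin_att (fun m => m \in M)
           (fun m => cut_size (aux_vertices M) (Gm_rel e M m) (Some v) None) #|T|.+1)
    => [E | [m mM E]]; first by move: dlt; rewrite /dmin E ltnn.
  rewrite -/dmin in E.
  have nadj : ~~ Gm_rel e M m (Some v) None.
    apply/negP => adj; move: E; rewrite /cut_size adj cD subn1 /= => E.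
    by apply: (@ar2 (sigma M)); rewrite -{1}E -pe.
  have clt : cut_size (aux_vertices M) (Gm_rel e M m) (Some v) None < #|aux_vertices M|.
    by rewrite -E cD; apply: ar1 (leqnn _); rewrite -pe.
  case: (cut_att nadj clt) => S [sub sep cS].
  case: (sub_nm S sub) => nS vS CN.
  have cC : #|[set x | Some x \in S]| = dmin by rewrite card_someS // cS E.
  have vC : v \notin [set x | Some x \in S] by rewrite inE.
  apply: (not_ki _ CN _ _ _ vC (PF_eq1 esy vN nS vS sep)).
  - apply/subsetP => x; rewrite in_setU1 => /orP[/eqP -> // | /(subsetP CN) //].
  - by apply: leq_trans; first exact: cardU1_le; rewrite cC pe.
  - by rewrite cC pe leqnSn.
  - by rewrite in_setU1 eqxx.
have pe : piv = dstar - 1 by rewrite /piv; apply/minn_idPr/ltnW.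
have nadj : ~~ Gstar_rel e M (Some v) None.
  apply/negP => adj; have E : dstar = sigma M by rewrite /dstar /cut_size adj cD subn1.
  have h : dstar - 1 + 2 <= sigma M by rewrite -pe.
  exact: (ar3 sgpos h E).
have clt : dstar < #|aux_vertices M| by rewrite cD; apply: ar4; rewrite -pe.
case: (cut_att nadj clt) => S [sub sep cS].
case: (sub_nm S sub) => nS vS CN.
set C := [set x | Some x \in S] in CN *.
have cC : #|C| = dstar by rewrite card_someS.
have [c hc] : exists c, #|C :\ c| <= #|C| - 1.
  case: (set_0Vmem C) => [-> | [c cC']]; first by exists v; rewrite set0D cards0.
  by exists c; rewrite (cardsD1 c C) cC' add1n subSS subn0.
have CcN : C :\ c \subset nonmon M by apply: subset_trans (subsetDl _ _) CN.
have vC : v \notin C :\ c by rewrite !inE (negbTE vS) andbF.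
apply: (not_ki _ CcN _ _ _ vC (PF_eq2 esy vN c nS vS sep)).
- apply/subsetP => x; rewrite in_setU1 => /orP[/eqP -> // | /(subsetP CcN) //].
- by apply: leq_trans; first exact: cardU1_le; rewrite pe; apply: ar9 hc cC.
- by apply: leq_trans; first exact: leqnSn; rewrite pe; apply: ar9 hc cC.
- by rewrite in_setU1 eqxx.
Qed.
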